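(* Let $E$ be a finite set and $V \subset \mathbb R^E$ a linear subspace with oriented matroid $M$. Let $\sim$ be the equivalence relation on triples $(F,G,T)$ ($T$ a tope of $M$, $F\subset G$ flats relatively acyclic in $T$) given by $(F,G,T)\sim(F',G',T')$ iff $(F,G)=(F',G')$ and $\pi_{G\setminus F}(T)=\pi_{G\setminus F}(T')$. Then the equivalence classes of $\sim$ are in bijection with the cells $Y_{FGT}^\circ$, where $F\subset G$ range over flats of $M$ and $T$ over topes of $(M/F)|_G$. If $[S,I,J]$ is the equivalence class (of the triple $(I,J,S)$) corresponding to $Y_{FGT}^\circ$, then $Y_{FGT}^\circ = {}_S\mathcal Y_{IJ}^\circ$. Explicitly, $Y_{FGT}^\circ = {}_S\mathcal Y_{IJ}^\circ$ if and only if $(F,G) = (I,J)$ and $\pi_{G\setminus F}(S) = \pi_{G\setminus F}(T)$.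
   Context: $\mathbb P^1_{\mathbb R}=\mathbb R\cup\{\infty\}$. The sign map $s:\mathbb R^E\to\{-,0,+\}^E$ records signs of coordinates; the covectors of $M$ are $\{s(v):v\in V\}$; for a signed set $X$, $X^-,X^0,X^+$ are coordinates with value $-,0,+$; $X\le Y$ means $X^+\subset Y^+$, $X^-\subset Y^-$; topes are maximal covectors; flats are the sets $X^0$. A flat is relatively acyclic in a tope $T$ if it equals $X^0$ for a covector $X\le T$. $\pi_A$ denotes restriction to coordinates in $A$. For a flat $F$, $M/F$ is the oriented matroid on $E$ whose covectors are the covectors $X$ of $M$ with $F\subset X^0$; for a flat $G\supset F$, $(M/F)|_G$ has covectors $\pi_G(X)$ for $X$ covectors of $M/F$; its topes are signed sets on $G$ with zero set $F$. $Y_V$ is the Zariski closure of $V$ in $(\mathbb P^1_{\mathbb R})^E$, and for such $F\subset G$, $T$: $Y_{FGT}^\circ := Y_V\cap(0^F\times\mathbb R_{>0}^{T^+}\times\mathbb R_{<0}^{T^-}\times\infty^{E\setminus G})$. ${}_S\mathcal Y_V$ is the analytic closure of $s^{-1}(S)\cap V$ in $(\mathbb P^1_{\mathbb R})^E$, and ${}_S\mathcal Y_{IJ}^\circ := {}_S\mathcal Y_V \cap (0^I\times\mathbb R_{>0}^{(J\setminus I)\cap S^+}\times\mathbb R_{<0}^{(J\setminus I)\cap S^-}\times\infty^{E\setminus J})$. *)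

(* Defs.v *)
From Stdlib Require List.
From HB Require Import structures.
From mathcomp Require Import all_boot all_order all_algebra.
From mathcomp Require Import boolp classical_sets reals.
Set Implicit Arguments. Unset Strict Implicit. Unset Printing Implicit Defensive.
Import Order.TTheory GRing.Theory Num.Theory.
Local Open Scope ring_scope.

Section Defs.
Variables (R : realType) (E : finType).

Definition is_subspace (V : set (E -> R)) : Prop :=
  V (fun _ => 0) /\
  (forall u v, V u -> V v -> V (fun e => u e + v e)) /\
  (forall (a : R) v, V v -> V (fun e => a * v e)).

(* ---------- signed sets (values in {-1,0,1} : int) ---------- *)
Definition sgnset := E -> int.

Definition posset (X : sgnset) : {set E} := [set e | 0 < X e].
Definition negset (X : sgnset) : {set E} := [set e | X e < 0].
Definition zeroset (X : sgnset) : {set E} := [set e | X e == 0].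

Definition sle (X Y : sgnset) : Prop :=
  posset X \subset posset Y /\ negset X \subset negset Y.

Definition covector (V : set (E -> R)) (X : sgnset) : Prop :=
  exists2 v, V v & forall e, X e = sgz (v e).

Definition tope (V : set (E -> R)) (T : sgnset) : Prop :=
  covector V T /\ forall Y, covector V Y -> sle T Y -> forall e, Y e = T e.

Definition flat (V : set (E -> R)) (F : {set E}) : Prop :=
  exists2 X, covector V X & zeroset X = F.

Definition rel_acyclic (V : set (E -> R)) (F : {set E}) (T : sgnset) : Prop :=
  exists X, [/\ covector V X, sle X T & zeroset X = F].

(* restriction pi_G, encoded as a signed set on E that is 0 outside G *)
Definition restr (G : {set E}) (X : sgnset) : sgnset :=
  fun e => if e \in G then X e else 0.

(* covectors of (M/F)|_G : pi_G(X) for covectors X of M with F \subset X^0 *)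
Definition minor_covector (V : set (E -> R)) (F G : {set E}) (X : sgnset) : Prop :=
  exists Y, [/\ covector V Y, F \subset zeroset Y & forall e, X e = restr G Y e].

Definition minor_tope (V : set (E -> R)) (F G : {set E}) (T : sgnset) : Prop :=
  minor_covector V F G T /\
  forall Y, minor_covector V F G Y -> sle T Y -> forall e, Y e = T e.

Definition adm_triple (V : set (E -> R)) (I J : {set E}) (S : sgnset) : Prop :=
  [/\ tope V S, I \subset J, rel_acyclic V I S & rel_acyclic V J S].

Definition triple_equiv (I J : {set E}) (S : sgnset)
                        (I' J' : {set E}) (S' : sgnset) : Prop :=
  [/\ I = I', J = J' & forall e, e \in J :\: I -> S e = S' e].

(* ---------- P^1_R = R \cup {oo}, encoded as option R (None = oo) ---------- *)
Definition P1 := option R.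

Definition homx (p : P1) : R := if p is Some a then a else 1.
Definition homy (p : P1) : R := if p is Some _ then 1 else 0.

(* polynomials in the variables x_e, y_e (e in E): lists of terms
   (coefficient, exponents (deg in x_e, deg in y_e)) *)
Definition mpol := seq (R * (E -> nat * nat)).

Definition peval (f : mpol) (p : E -> P1) : R :=
  \sum_(t <- f) t.1 * \prod_(e : E) (homx (p e) ^+ (t.2 e).1 * homy (p e) ^+ (t.2 e).2).

Definition multihom (f : mpol) : Prop :=
  exists d : E -> nat, forall t, List.In t f -> forall e, ((t.2 e).1 + (t.2 e).2)%N = d e.

Definition embed (v : E -> R) : E -> P1 := fun e => Some (v e).

(* Y_V : Zariski closure of V in (P^1_R)^E *)
Definition YV (V : set (E -> R)) : set (E -> P1) :=
  [set p | forall f, multihom f -> (forall v, V v -> peval f (embed v) = 0) ->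
                     peval f p = 0].

(* analytic (Euclidean) closure in (P^1_R)^E of a subset of R^E;
   basic neighbourhoods of oo in P^1 are {oo} \cup {|x| > M} *)
Definition aclosure (A : set (E -> R)) : set (E -> P1) :=
  [set p | forall eps : R, 0 < eps -> exists2 v, A v &
     forall e, match p e with
               | Some a => `|v e - a| < eps
               | None => eps^-1 < `|v e|
               end].

Definition cellY (V : set (E -> R)) (F G : {set E}) (T : sgnset) : set (E -> P1) :=
  [set p | YV V p /\ forall e,
     [/\ e \in F -> p e = Some 0,
         0 < T e -> exists2 x, 0 < x & p e = Some x,
         T e < 0 -> exists2 x, x < 0 & p e = Some x
       & e \notin G -> p e = None]].

Definition SYV (V : set (E -> R)) (S : sgnset) : set (E -> P1) :=
  aclosure [set v | V v /\ forall e, sgz (v e) = S e].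

Definition cellSY (V : set (E -> R)) (S : sgnset) (I J : {set E}) : set (E -> P1) :=
  [set p | SYV V S p /\ forall e,
     [/\ e \in I -> p e = Some 0,
         e \in J :\: I -> 0 < S e -> exists2 x, 0 < x & p e = Some x,
         e \in J :\: I -> S e < 0 -> exists2 x, x < 0 & p e = Some x
       & e \notin J -> p e = None]].

End Defs.

(* Main.v *)
Require Import Defs.
From HB Require Import structures.
From mathcomp Require Import all_boot all_order all_algebra.
From mathcomp Require Import boolp classical_sets reals.
From mathcomp Require Import lra zify ring.
Set Implicit Arguments. Unset Strict Implicit. Unset Printing Implicit Defensive.
Import Order.TTheory GRing.Theory Num.Theory.
Local Open Scope ring_scope.

Section Aux.
Variables (R : realType) (E : finType).
Implicit Types (u v w : E -> R).

Lemma bound_fin (h : E -> R) : exists2 M : R, 0 < M & forall e, `|h e| < M.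
Proof.
exists (1 + \sum_e `|h e|).
  by apply: ltr_pwDl => //; apply: sumr_ge0 => i _; exact: normr_ge0.
move=> e; rewrite (bigD1 e) //=.
have : 0 <= \sum_(i | i != e) `|h i| by apply: sumr_ge0 => i _; exact: normr_ge0.
lra.
Qed.

Lemma sgz_addsmall (a d : R) : `|d| < `|a| -> sgz (a + d) = sgz a.
Proof.
case: (ltrgt0P a) => Ha.
- rewrite ltr_norml => /andP [H1 H2].
  rewrite !gtr0_sgz //; lra.
- rewrite ltr_norml => /andP [H1 H2].
  rewrite !ltr0_sgz //; lra.
- by rewrite ltNge normr_ge0.
Qed.

End Aux.
Section Aux2.
Variables (R : realType) (E : finType).
Implicit Types (u v w : E -> R).

Lemma perturb u w : exists2 d : R, 0 < d & forall d', 0 < d' -> d' <= d ->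
  forall e, sgz (u e + d' * w e) = if u e == 0 then sgz (w e) else sgz (u e).
Proof.
have [M M0 HM] := bound_fin (fun e => if u e == 0 then 0 else `|w e| / `|u e|).
exists M^-1; first by rewrite invr_gt0.
move=> d' d0 dle e; case: eqP => [->|/eqP ue0].
  by rewrite add0r sgzM gtr0_sgz // mul1r.
apply: sgz_addsmall.
have := HM e; rewrite (negbTE ue0) ger0_norm; last first.
  by apply: divr_ge0; exact: normr_ge0.
have un : 0 < `|u e| by rewrite normr_gt0.
move=> H; rewrite normrM (gtr0_norm d0).
have H1 : `|w e| < M * `|u e| by rewrite -ltr_pdivrMr.
have H2 : d' * M <= 1 by rewrite -(mulVf (lt0r_neq0 M0)) ler_pM2r.
have H3 : d' * `|w e| < d' * (M * `|u e|) by rewrite ltr_pM2l.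
rewrite mulrA in H3.
have H4 : d' * M * `|u e| <= `|u e| by rewrite ler_piMl // ltW.
exact: (lt_le_trans H3 H4).
Qed.
End Aux2.
Section Dual.
Variables (R : realType) (E : finType).

Definition phiv (u : E -> R) : 'rV[R]_#|E| := \row_i u (enum_val i).
Definition psiv (r : 'rV[R]_#|E|) : E -> R := fun e => r 0 (enum_rank e).

Lemma psivK u : psiv (phiv u) = u.
Proof. by apply: funext => e; rewrite /psiv mxE enum_rankK. Qed.

Lemma psi_sub (U : set (E -> R)) m (M : 'M[R]_(m, #|E|)) : is_subspace U ->
  (forall i, U (psiv (row i M))) -> forall r, (r <= M)%MS -> U (psiv r).
Proof.
move=> [U0 [UD UZ]] HM r /submxP [D ->]; rewrite mulmx_sum_row.
apply: (big_ind (fun x => U (psiv x))).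
- by have -> : psiv 0 = (fun _ => 0) by apply: funext => e; rewrite /psiv mxE.
- move=> x y Ux Uy.
  have -> : psiv (x + y) = (fun e => psiv x e + psiv y e).
    by apply: funext => e; rewrite /psiv mxE.
  exact: UD.
- move=> i _.
  have -> : psiv (D 0 i *: row i M) = (fun e => D 0 i * psiv (row i M) e).
    by apply: funext => e; rewrite /psiv mxE.
  exact: UZ.
Qed.

Lemma sum_coord (C : 'M[R]_#|E|) k (x : E -> R) :
  \sum_e C (enum_rank e) k * x e = (phiv x *m C) 0 k.
Proof.
rewrite mxE (reindex enum_rank) /=; last exact: onW_bij (@enum_rank_bij E).
by apply: eq_bigr => e _; rewrite mxE enum_rankK mulrC.
Qed.

Lemma duality (U : set (E -> R)) (q : E -> R) : is_subspace U -> ~ U q ->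
  exists m : E -> R, (forall u, U u -> \sum_e m e * u e = 0) /\ \sum_e m e * q e != 0.
Proof.
move=> HU nUq.
pose good (A : 'M[R]_#|E|) := forall i, U (psiv (row i A)).
have ex0 : exists k, `[< exists A, good A /\ \rank A = k >].
  exists (\rank (0 : 'M[R]_#|E|)); apply/asboolP; exists 0; split => // i.
  have -> : psiv (row i 0) = (fun _ => 0) by apply: funext => e; rewrite /psiv !mxE.
  by case: HU.
have ub : forall k, `[< exists A, good A /\ \rank A = k >] -> (k <= #|E|)%N.
  by move=> k /asboolP [A [_ <-]]; exact: rank_leq_col.
case: (ex_maxnP ex0 ub) => k /asboolP [A [gA rA]] maxk.
have HA : forall u, U u -> (phiv u <= A)%MS.
  move=> u Uu; apply: contrapT => /negP nsub.
  pose B := (A + phiv u)%MS.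
  have gB : good B.
    move=> i; apply: (psi_sub (M := col_mx A (phiv u))) => //.
      move=> j; rewrite -(splitK j); case: (split j) => j' /=; first by rewrite rowKu.
      rewrite rowKd.
      have -> : row j' (phiv u) = phiv u by apply/rowP => c; rewrite !mxE.
      by rewrite psivK.
    rewrite -addsmxE; exact: row_sub.
  have ltAB : (A < B)%MS.
    rewrite ltmxE addsmxSl /=; apply: contra nsub => HB.
    exact: submx_trans (addsmxSr A (phiv u)) HB.
  have := rank_ltmx ltAB; rewrite rA.
  have := maxk (\rank B) (introT (asboolP _) (ex_intro _ B (conj gB erefl))).
  lia.
have nq : ~~ (phiv q <= A)%MS.
  by apply/negP => /(psi_sub HU gA); rewrite psivK.
rewrite submxE in nq.
have [k' Hk] : exists k', (phiv q *m cokermx A) 0 k' != 0.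
  case: (pselect (exists k', (phiv q *m cokermx A) 0 k' != 0)) => // H.
  exfalso; move/negP: nq; apply; apply/eqP/rowP => k'; rewrite [RHS]mxE.
  by apply/eqP; apply: contrapT => Hne; apply: H; exists k'; apply/negP.
exists (fun e => cokermx A (enum_rank e) k'); split; last by rewrite sum_coord.
move=> u Uu; rewrite sum_coord.
by have := HA u Uu; rewrite submxE => /eqP ->; rewrite mxE.
Qed.
End Dual.
Section Poly1.
Variables (R : realType) (E : finType).

Lemma eq_big_In (T : Type) (f : seq T) (g h : T -> R) :
  (forall t, List.In t f -> g t = h t) -> \sum_(t <- f) g t = \sum_(t <- f) h t.
Proof.
elim: f => [|a f IH] H; first by rewrite !big_nil.
rewrite !big_cons H /=; last by left.
by rewrite IH // => t Ht; apply: H; right.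
Qed.

Lemma In_map (T1 T2 : Type) (g : T1 -> T2) (s : seq T1) t :
  List.In t (map g s) -> exists x, List.In x s /\ t = g x.
Proof.
elim: s => [|a s IH] //= [<-|/IH [x [Hx ->]]]; first by exists a; split; [left|].
by exists x; split; [right|].
Qed.

Lemma In_mem (T : eqType) (s : seq T) x : List.In x s -> x \in s.
Proof.
elim: s => [|a s IH] //= [->|/IH H]; first by rewrite inE eqxx.
by rewrite inE H orbT.
Qed.

Definition linpol (m : E -> R) (J : {set E}) : mpol R E :=
  [seq (m e, fun e' => if e' == e then (1,0)%N else if e' \in J then (0,1)%N else (0,0)%N)
  | e <- enum J].

Lemma linpol_hom m (J : {set E}) : multihom (linpol m J).
Proof.
exists (fun e' => if e' \in J then 1%N else 0%N) => t Ht.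
have [e [He ->]] := In_map Ht; move=> e' /=.
have eJ : e \in J by move/In_mem: He; rewrite mem_enum.
by case: eqP => [->|_]; [rewrite eJ | case: ifP].
Qed.

Lemma linpol_eval m (J : {set E}) (p : E -> P1 R) : (forall e, e \in J -> homy (p e) = 1) ->
  peval (linpol m J) p = \sum_(e in J) m e * homx (p e).
Proof.
move=> hy; rewrite /peval big_map big_enum /=; apply: eq_bigr => e eJ.
congr (_ * _); rewrite (bigD1 e) //= eqxx expr1 expr0 mulr1.
rewrite big1 ?mulr1 // => e' ne; rewrite (negbTE ne); case: ifP => H.
  by rewrite expr0 expr1 mul1r hy.
by rewrite !expr0 mulr1.
Qed.

Lemma sum_in_J (m x : E -> R) (J : {set E}) : (forall e, e \notin J -> m e = 0) ->
  \sum_(e in J) m e * x e = \sum_e m e * x e.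
Proof.
move=> mJ; rewrite big_mkcond; apply: eq_bigr => e _.
by case: ifP => // /negbT /mJ ->; rewrite mul0r.
Qed.

Lemma get_m (V : set (E -> R)) (J : {set E}) (p : E -> P1 R) : is_subspace V ->
  (forall e, e \in J -> exists a, p e = Some a) ->
  ~ (exists v, V v /\ forall e, e \in J -> p e = Some (v e)) ->
  exists m : E -> R, [/\ (forall u, V u -> \sum_e m e * u e = 0),
     (forall e, e \notin J -> m e = 0) & \sum_e m e * homx (p e) != 0].
Proof.
move=> [V0 [VD VZ]] pfin nv.
pose U : set (E -> R) := fun u => exists v, V v /\ forall e, e \in J -> u e = v e.
have HU : is_subspace U.
  split; first by exists (fun _ => 0).
  split.
    move=> u1 u2 [v1 [V1 H1]] [v2 [V2 H2]]; exists (fun e => v1 e + v2 e).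
    by split; [exact: VD | move=> e eJ; rewrite H1 // H2].
  move=> a u [v1 [V1 H1]]; exists (fun e => a * v1 e).
  by split; [exact: VZ | move=> e eJ; rewrite H1].
have nU : ~ U (fun e => homx (p e)).
  move=> [v [Vv Hv]]; apply: nv; exists v; split => // e eJ.
  by have [a pa] := pfin e eJ; rewrite -Hv // pa.
have [m [Hm1 Hm2]] := duality HU nU.
exists m; split => //.
- by move=> u Vu; apply: Hm1; exists u.
- move=> e eJ.
  have := Hm1 (fun e' => if e' == e then 1 else 0).
  rewrite (bigD1 e) //= eqxx mulr1 big1 ?addr0; last first.
    by move=> e' /negbTE ->; rewrite mulr0.
  apply; exists (fun _ => 0); split => // e' e'J.
  by case: eqP => // ee; move: eJ; rewrite -ee e'J.
Qed.

Lemma YV_fin (V : set (E -> R)) (J : {set E}) (p : E -> P1 R) : is_subspace V ->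
  YV V p -> (forall e, e \in J -> exists a, p e = Some a) ->
  exists v, V v /\ forall e, e \in J -> p e = Some (v e).
Proof.
move=> HV Yp pfin; apply: contrapT => nv.
have [m [Hm1 Hm2 Hm3]] := get_m HV pfin nv.
have H : peval (linpol m J) p = 0.
  apply: Yp; first exact: linpol_hom.
  move=> v Vv; rewrite linpol_eval //= (sum_in_J _ Hm2); exact: Hm1.
rewrite linpol_eval in H; last by move=> e /pfin [a ->].
have HH : \sum_(e in J) m e * homx (p e) = \sum_e m e * homx (p e) := sum_in_J _ Hm2.
by rewrite H in HH; rewrite -HH eqxx in Hm3.
Qed.

End Poly1.
Section Acl.
Variables (R : realType) (E : finType).

Lemma acl_fin (V A : set (E -> R)) (J : {set E}) (p : E -> P1 R) : is_subspace V ->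
  (forall x, A x -> V x) -> aclosure A p ->
  (forall e, e \in J -> exists a, p e = Some a) ->
  exists v, V v /\ forall e, e \in J -> p e = Some (v e).
Proof.
move=> HV AV Ap pfin; apply: contrapT => nv.
have [m [Hm1 Hm2 Hm3]] := get_m HV pfin nv.
set c := \sum_e m e * homx (p e) in Hm3.
set N := \sum_e `|m e| + 1.
have N0 : 0 < N.
  have : 0 <= \sum_e `|m e| by apply: sumr_ge0 => i _; exact: normr_ge0.
  rewrite /N; lra.
have c0 : 0 < `|c| by rewrite normr_gt0.
have [x Ax Hx] := Ap (`|c| / N) (divr_gt0 c0 N0).
have Vx := AV x Ax.
have Hc : c = \sum_e m e * (homx (p e) - x e).
  rewrite [RHS](eq_bigr (fun e => m e * homx (p e) - m e * x e)); last first.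
    by move=> e _; rewrite mulrBr.
  by rewrite sumrB (Hm1 x Vx) subr0.
have H1 : `|c| <= \sum_e `|m e| * (`|c| / N).
  rewrite {1}Hc; apply: (le_trans (ler_norm_sum _ _ _)); apply: ler_sum => e _.
  rewrite normrM; case: (boolP (e \in J)) => eJ.
    have [a pa] := pfin e eJ; have := Hx e; rewrite pa /= => H.
    by apply: ler_wpM2l; [exact: normr_ge0 | rewrite distrC ltW].
  by rewrite Hm2 // normr0 !mul0r.
rewrite -mulr_suml in H1.
have H2 : (\sum_e `|m e|) * (`|c| / N) < N * (`|c| / N).
  rewrite ltr_pM2r ?divr_gt0 //; rewrite /N; lra.
have E1 : N * (`|c| / N) = `|c| by rewrite mulrCA mulfV ?mulr1 // gt_eqF.
rewrite E1 in H2.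
have := le_lt_trans H1 H2; lra.
Qed.
End Acl.
Section Zar.
Variables (R : realType) (E : finType).

Lemma zar_point (V : set (E -> R)) (J : {set E}) (v w : E -> R) :
  is_subspace V -> V v -> V w -> (forall e, e \in J -> w e = 0) ->
  (forall e, e \notin J -> w e != 0) ->
  YV V (fun e => if e \in J then Some (v e) else None).
Proof.
move=> [V0 [VD VZ]] Vv Vw wJ wnJ f [d Hd] Hvan.
pose Px e : {poly R} := if e \in J then (v e)%:P else 'X * (v e)%:P + (w e)%:P.
pose Py e : {poly R} := if e \in J then 1 else 'X.
pose Q := \sum_(t <- f) t.1%:P * \prod_e (Px e ^+ (t.2 e).1 * Py e ^+ (t.2 e).2).
have HQ s : Q.[s] = \sum_(t <- f) t.1 * \prod_e ((Px e).[s] ^+ (t.2 e).1 * (Py e).[s] ^+ (t.2 e).2).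
  rewrite /Q horner_sum; apply: eq_bigr => t _; rewrite hornerM hornerC horner_prod.
  by congr (_ * _); apply: eq_bigr => e _; rewrite hornerM !horner_exp.
have Qs s : 0 < s -> Q.[s] = 0.
  move=> s0; pose u := fun e => v e + s^-1 * w e.
  have Vu : V u by apply: VD => //; exact: VZ.
  have := Hvan u Vu; rewrite /peval => H0.
  rewrite HQ; transitivity ((\prod_e (if e \in J then 1 else s ^+ d e)) *
    \sum_(t <- f) t.1 * \prod_e (homx (embed u e) ^+ (t.2 e).1 * homy (embed u e) ^+ (t.2 e).2));
    last by rewrite H0 mulr0.
  rewrite mulr_sumr; apply: eq_big_In => t Ht.
  rewrite mulrCA -big_split /=; congr (_ * _); apply: eq_bigr => e _.
  rewrite /Px /Py /u /=; have := Hd t Ht e; case: ifP => eJ Hde.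
    by rewrite hornerC hornerE wJ // mulr0 addr0 mul1r.
  rewrite hornerD hornerM hornerX !hornerC -Hde exprD expr1n mulr1.
  have -> : s * v e + w e = s * (v e + s^-1 * w e).
    by rewrite mulrDr mulrA mulfV ?mul1r // gt_eqF.
  rewrite exprMn; ring.
have Q0 : Q = 0.
  apply/eqP; apply: contraT => nQ.
  have := max_poly_roots nQ (rs := [seq (i.+1)%:R | i <- iota 0 (size Q)]).
  rewrite size_map size_iota ltnn; apply.
    by apply/allP => x /mapP [i _ ->]; rewrite /root Qs //.
  rewrite (map_inj_uniq (f := fun i : nat => (i.+1)%:R : R)) ?iota_uniq //.
  by move=> i j /eqP; rewrite eqr_nat eqSS => /eqP.
have := congr1 (fun P => P.[0]) Q0; rewrite /= horner0 HQ.
have -> : \sum_(t <- f) t.1 * \prod_e ((Px e).[0] ^+ (t.2 e).1 * (Py e).[0] ^+ (t.2 e).2)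
  = (\prod_e (if e \in J then 1 else w e ^+ d e)) * peval f (fun e => if e \in J then Some (v e) else None).
  rewrite /peval mulr_sumr; apply: eq_big_In => t Ht.
  rewrite mulrCA -big_split /=; congr (_ * _); apply: eq_bigr => e _.
  rewrite /Px /Py; have := Hd t Ht e; case: ifP => eJ Hde.
    by rewrite hornerC hornerE mul1r.
  rewrite hornerD hornerM hornerX !hornerC mul0r add0r /=.
  case: (t.2 e).2 Hde => [|b] Hde.
    by rewrite addn0 in Hde; rewrite Hde !expr0 expr1n !mulr1.
  by rewrite !expr0n /= !mulr0.
move/eqP; rewrite mulf_eq0 => /orP [|/eqP //].
move/prodf_neq0 => H; exfalso; apply: H => e _.
by case: ifP => eJ; [exact: oner_neq0 | apply: expf_neq0; apply: wnJ; rewrite eJ].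
Qed.
End Zar.
Section AclPoint.
Variables (R : realType) (E : finType).

Lemma acl_point (V : set (E -> R)) (S : E -> int) (J : {set E}) (v b s0 : E -> R) :
  is_subspace V -> V v -> V b -> V s0 -> (forall e, sgz (s0 e) = S e) ->
  (forall e, e \in J -> b e = 0) -> (forall e, e \notin J -> b e != 0 /\ sgz (b e) = S e) ->
  (forall e, e \in J -> v e != 0 -> sgz (v e) = S e) ->
  SYV V S (fun e => if e \in J then Some (v e) else None).
Proof.
move=> [V0 [VD VZ]] Vv Vb Vs0 Hs0 bJ bnJ vJ eps eps0.
have [d0 d0pos Hd] := perturb v s0.
have [K K0 HK] := bound_fin s0.
pose mu := Num.min d0 (eps / K).
have mu0 : 0 < mu by rewrite lt_min d0pos divr_gt0.
have mu1 : mu <= d0 by rewrite ge_min lexx.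
have mu2 : mu <= eps / K by rewrite ge_min lexx orbT.
pose y := fun e => v e + mu * s0 e.
have Hy e : sgz (y e) = if v e == 0 then sgz (s0 e) else sgz (v e) by exact: Hd.
have [M M0 HM] := bound_fin (fun e => if e \in J then 0 else (`|y e| + eps^-1) / `|b e|).
have HMb e : e \notin J -> `|y e| + eps^-1 < `|M * b e|.
  move=> eJ; have := HM e; rewrite (negbTE eJ).
  have bn : 0 < `|b e| by rewrite normr_gt0; case: (bnJ e eJ).
  rewrite ger0_norm; last by apply: divr_ge0 => //; apply: addr_ge0 => //; rewrite invr_ge0 ltW.
  by rewrite ltr_pdivrMr // normrM (gtr0_norm M0).
exists (fun e => M * b e + y e).
  split; first by apply: (VD); [exact: VZ | exact: VD _ _ Vv (VZ _ _ Vs0)].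
  move=> e; case: (boolP (e \in J)) => eJ.
    rewrite bJ // mulr0 add0r Hy; case: eqP => [_|/eqP vn] //.
    exact: vJ.
  rewrite sgz_addsmall; last first.
    have := HMb e eJ; have : 0 < eps^-1 by rewrite invr_gt0.
    lra.
  by rewrite sgzM gtr0_sgz // mul1r; case: (bnJ e eJ).
move=> e; case: (boolP (e \in J)) => eJ.
  rewrite bJ // mulr0 add0r /y addrC addKr normrM (gtr0_norm mu0).
  apply: (le_lt_trans (y := eps / K * `|s0 e|)).
    by apply: ler_wpM2r => //; exact: normr_ge0.
  rewrite -[X in _ < X](divfK (lt0r_neq0 K0) eps).
  by rewrite ltr_pM2l ?divr_gt0.
apply: (lt_le_trans _ (lerB_normD _ _)).
have := HMb e eJ; lra.
Qed.
End AclPoint.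
Section Comb.
Variables (R : realType) (E : finType).
Variable V : set (E -> R).
Hypothesis HV : is_subspace V.

Definition Cell (I J : {set E}) (sg : E -> int) : set (E -> P1 R) := fun p =>
  [/\ exists v, [/\ V v, (forall e, e \in I -> v e = 0) & forall e, e \in J -> p e = Some (v e)],
      forall e, e \notin J -> p e = None &
      forall e, e \in J :\: I -> sgz (homx (p e)) = sg e].

Lemma cov_vec X : covector V X -> exists2 x : E -> R, V x & X = (fun e => sgz (x e)).
Proof. by move=> [x Vx HX]; exists x => //; apply: funext. Qed.

Lemma zero_vec (X : sgnset E) (x : E -> R) (F : {set E}) : X = (fun e => sgz (x e)) -> zeroset X = F ->
  forall e, (x e == 0) = (e \in F).
Proof. by move=> -> <- e; rewrite inE sgz_eq0. Qed.

Lemma flat_vec F : flat V F -> exists2 z : E -> R, V z & forall e, (z e == 0) = (e \in F).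
Proof.
move=> [X /cov_vec [z Vz HX] ZF]; exists z => //; exact: zero_vec HX ZF.
Qed.

Lemma sle_sgz (x y : E -> R) e : sle (fun e => sgz (x e)) (fun e => sgz (y e)) ->
  x e != 0 -> sgz (y e) = sgz (x e).
Proof.
move=> [/fintype.subsetP Hp /fintype.subsetP Hn] xn.
case: (ltrgt0P (x e)) xn => // hx _.
  have := Hp e; rewrite !inE !sgz_gt0 => /(_ hx) hy.
  by rewrite !gtr0_sgz.
have := Hn e; rewrite !inE !sgz_lt0 => /(_ hx) hy.
by rewrite !ltr0_sgz.
Qed.

Lemma racyc_vec F (t : E -> R) : rel_acyclic V F (fun e => sgz (t e)) ->
  exists x : E -> R, [/\ V x, forall e, (x e == 0) = (e \in F) &
                     forall e, x e != 0 -> sgz (t e) = sgz (x e)].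
Proof.
move=> [X [/cov_vec [x Vx HX] sXT ZF]]; exists x; split => //.
  exact: zero_vec HX ZF.
by move=> e; apply: sle_sgz; rewrite -HX.
Qed.

Lemma tope_vec T : tope V T -> exists2 s0 : E -> R, V s0 & T = (fun e => sgz (s0 e)).
Proof. by move=> [/cov_vec]. Qed.

End Comb.
Section Comb2.
Variables (R : realType) (E : finType).
Variable V : set (E -> R).
Hypothesis HV : is_subspace V.

Lemma sgz_from (a b : R) (k : int) : k = sgz b -> k != 0 ->
  (0 < k -> 0 < a) -> (k < 0 -> a < 0) -> sgz a = k.
Proof.
move=> -> kn Hp Hn; case: (ltrgt0P b) kn Hp Hn => hb.
- by rewrite gtr0_sgz // => _ /(_ ltr01) ha _; rewrite gtr0_sgz.
- by rewrite ltr0_sgz // => _ _ /(_ (ltrN10 _)) ha; rewrite ltr0_sgz.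
- by rewrite hb sgz0 eqxx.
Qed.

Lemma some_inj (T : Type) (a b : T) : Some a = Some b -> a = b.
Proof. by case. Qed.

Lemma L2 I J S : adm_triple V I J S -> cellSY V S I J = Cell V I J S.
Proof.
move=> [/tope_vec [s0 Vs0 HS] IJ rI rJ]; subst S.
have [x [Vx xI xs]] := racyc_vec rI.
have [b [Vb bJ bs]] := racyc_vec rJ.
have Snz e : e \notin I -> sgz (s0 e) != 0.
  by move=> eI; rewrite xs ?sgz_eq0 xI.
apply: funext => p; apply: propext; split.
- move=> [Sp Hp].
  have pfin e : e \in J -> exists a, p e = Some a.
    move=> eJ; have [H1 H2 H3 H4] := Hp e.
    case: (boolP (e \in I)) => eI; first by exists 0; exact: H1.
    have eJI : e \in J :\: I by rewrite inE eI eJ.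
    have := Snz e eI; case: (ltrgt0P (sgz (s0 e))) => // hs _.
      by have [a _ ->] := H2 eJI hs; exists a.
    by have [a _ ->] := H3 eJI hs; exists a.
  have [v [Vv Hv]] := acl_fin HV (A := [set v | V v /\ forall e, sgz (v e) = sgz (s0 e)])
    (fun x Ax => proj1 Ax) Sp pfin.
  split.
  + exists v; split => // e eI; have [H1 _ _ _] := Hp e.
    by apply: some_inj; rewrite -Hv ?H1 // (fintype.subsetP IJ).
  + by move=> e eJ; have [_ _ _ H4] := Hp e; exact: H4.
  + move=> e eJI; have [_ H2 H3 _] := Hp e.
    have /setDP [eJ eI] := eJI.
    apply: (sgz_from (b := s0 e)) => //; first exact: Snz.
      by move=> /(H2 eJI) [a a0 ->].
    by move=> /(H3 eJI) [a a0 ->].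
- move=> [[v [Vv vI vJ]] pnJ psg].
  have -> : p = (fun e => if e \in J then Some (v e) else None).
    by apply: funext => e; case: ifP => eJ; [exact: vJ | apply: pnJ; rewrite eJ].
  split.
    apply: (acl_point HV Vv Vb Vs0) => //.
    + by move=> e eJ; apply/eqP; rewrite bJ.
    + move=> e eJ; have bn : b e != 0 by rewrite bJ.
      by split => //=; rewrite bs.
    + move=> e eJ vn; case: (boolP (e \in I)) => eI; first by rewrite vI ?eqxx in vn.
      have eJI : e \in J :\: I by rewrite inE eI eJ.
      by have := psg e eJI; rewrite vJ.
  move=> e; split.
  + by move=> eI; rewrite (fintype.subsetP IJ) // vI.
  + move=> eJI hs; have /setDP [eJ _] := eJI.
    exists (v e); last by rewrite eJ.
    by have := psg e eJI; rewrite vJ //= => H; rewrite -sgz_gt0 H.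
  + move=> eJI hs; have /setDP [eJ _] := eJI.
    exists (v e); last by rewrite eJ.
    by have := psg e eJI; rewrite vJ //= => H; rewrite -sgz_lt0 H.
  + by move=> /negbTE ->.
Qed.
End Comb2.
Section Comb3.
Variables (R : realType) (E : finType).
Variable V : set (E -> R).
Hypothesis HV : is_subspace V.

Lemma minor_vec F G T : minor_covector V F G T ->
  exists y : E -> R, [/\ V y, forall e, e \in F -> y e = 0 &
    forall e, T e = if e \in G then sgz (y e) else 0].
Proof.
move=> [Y [/cov_vec [y Vy HY] FY HT]]; subst Y; exists y; split => //.
by move=> e /(fintype.subsetP FY); rewrite inE sgz_eq0 => /eqP.
Qed.

Lemma Tnz F G T : flat V F -> minor_tope V F G T -> forall e, e \in G :\: F -> T e != 0.
Proof.
move=> /flat_vec [z Vz zF] [/minor_vec [y [Vy yF HT]] Tmax] e0 /setDP [e0G e0F].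
apply/negP => /eqP T0.
have y0 : y e0 = 0.
  by have := HT e0; rewrite e0G T0 => /esym/eqP; rewrite sgz_eq0 => /eqP.
have [d d0 Hd] := perturb y z.
have Hd' := Hd d d0 (lexx d).
have [V0 [VD VZ]] := HV.
pose Y' := fun e => if e \in G then sgz (y e + d * z e) else 0.
have mc : minor_covector V F G Y'.
  exists (fun e => sgz (y e + d * z e)); split => //.
  - by exists (fun e => y e + d * z e) => //; apply: (VD) => //; exact: VZ.
  - apply/fintype.subsetP => e eF; rewrite inE sgz_eq0 yF //.
    by have := zF e; rewrite eF => /eqP ->; rewrite mulr0 addr0.
have sl : sle T Y'.
  split; apply/fintype.subsetP => e; rewrite !inE HT /Y'; case: ifP => // eG.
    move=> hy; rewrite Hd' ifN //; rewrite -sgz_eq0; exact: lt0r_neq0.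
  move=> hy; rewrite Hd' ifN //; rewrite -sgz_eq0; exact: ltr0_neq0.
have := Tmax Y' mc sl e0; rewrite /Y' e0G T0 Hd' y0 eqxx => /eqP.
by rewrite sgz_eq0 zF (negbTE e0F).
Qed.

Lemma L1 F G T : flat V F -> flat V G -> F \subset G -> minor_tope V F G T ->
  cellY V F G T = Cell V F G T.
Proof.
move=> fF fG FG mT.
have Tn := Tnz fF mT.
have [_ [y [Vy yF HT]]] : True /\ _ := conj I (minor_vec mT.1).
have [g Vg gG] := flat_vec fG.
have TF e : e \in F -> T e = 0 by move=> eF; rewrite HT yF // sgz0; case: ifP.
have TG e : e \notin G -> T e = 0 by move=> eG; rewrite HT (negbTE eG).
apply: funext => p; apply: propext; split.
- move=> [Yp Hp].
  have pfin e : e \in G -> exists a, p e = Some a.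
    move=> eG; have [H1 H2 H3 H4] := Hp e.
    case: (boolP (e \in F)) => eF; first by exists 0; exact: H1.
    have eGF : e \in G :\: F by rewrite inE eF eG.
    have := Tn e eGF; case: (ltrgt0P (T e)) => // hs _.
      by have [a _ ->] := H2 hs; exists a.
    by have [a _ ->] := H3 hs; exists a.
  have [v [Vv Hv]] := YV_fin HV Yp pfin.
  split.
  + exists v; split => // e eF; have [H1 _ _ _] := Hp e.
    by apply: some_inj; rewrite -Hv ?H1 // (fintype.subsetP FG).
  + by move=> e eG; have [_ _ _ H4] := Hp e; exact: H4.
  + move=> e eGF; have [_ H2 H3 _] := Hp e.
    have /setDP [eG eF] := eGF.
    apply: (sgz_from (b := y e)) => //; first by rewrite HT eG.
    * exact: Tn.
    * by move=> /H2 [a a0 ->].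
    * by move=> /H3 [a a0 ->].
- move=> [[v [Vv vF vG]] pnG psg].
  have -> : p = (fun e => if e \in G then Some (v e) else None).
    by apply: funext => e; case: ifP => eG; [exact: vG | apply: pnG; rewrite eG].
  split.
    apply: (zar_point HV Vv Vg).
    + by move=> e eG; apply/eqP; rewrite gG.
    + by move=> e eG; rewrite gG.
  move=> e; split.
  + by move=> eF; rewrite (fintype.subsetP FG) // vF.
  + move=> hs; case: (boolP (e \in G)) => eG; last by rewrite TG ?ltxx in hs.
    case: (boolP (e \in F)) => eF; first by rewrite TF ?ltxx in hs.
    have eGF : e \in G :\: F by rewrite inE eF eG.
    exists (v e) => //.
    by have := psg e eGF; rewrite vG //= => H; rewrite -sgz_gt0 H.
  + move=> hs; case: (boolP (e \in G)) => eG; last by rewrite TG ?ltxx in hs.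
    case: (boolP (e \in F)) => eF; first by rewrite TF ?ltxx in hs.
    have eGF : e \in G :\: F by rewrite inE eF eG.
    exists (v e) => //.
    by have := psg e eGF; rewrite vG //= => H; rewrite -sgz_lt0 H.
  + by move=> /negbTE ->.
Qed.
End Comb3.
Section Comb4.
Variables (R : realType) (E : finType).
Variable V : set (E -> R).
Hypothesis HV : is_subspace V.

Definition wit (I J : {set E}) (sg : E -> int) :=
  [/\ I \subset J, exists v : E -> R, [/\ V v, (forall e, e \in I -> v e = 0) &
        forall e, e \in J :\: I -> sgz (v e) = sg e]
   & forall e, e \in J :\: I -> sg e != 0].

Lemma Cell_sub I J sg I' J' sg' : wit I J sg -> (forall e, e \in J' :\: I' -> sg' e != 0) ->
  (forall p, Cell V I J sg p -> Cell V I' J' sg' p) ->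
  [/\ I \subset I', J \subset J' & forall e, e \in J :\: I -> e \in J' :\: I' -> sg' e = sg e].
Proof.
move=> [IJ [v [Vv vI vs]] nz] nz' H.
pose p0 := fun e => if e \in J then Some (v e) else None.
have C0 : Cell V I J sg p0.
  split.
  - by exists v; split => // e eJ; rewrite /p0 eJ.
  - by move=> e /negbTE eJ; rewrite /p0 eJ.
  - by move=> e eJI; have /setDP [eJ _] := eJI; rewrite /p0 eJ /= vs.
have [[v' [Vv' v'I v'J]] pnJ' psg'] := H p0 C0.
have JJ' : J \subset J'.
  apply/fintype.subsetP => e eJ; apply: contraT => eJ'.
  by have := pnJ' e eJ'; rewrite /p0 eJ.
split => //.
  apply/fintype.subsetP => e eI.
  have eJ : e \in J by exact: (fintype.subsetP IJ).
  have eJ' : e \in J' by exact: (fintype.subsetP JJ').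
  apply: contraT => eI'.
  have eJI' : e \in J' :\: I' by rewrite inE eI' eJ'.
  have := psg' e eJI'; rewrite /p0 eJ /= vI // sgz0 => H0.
  by have := nz' e eJI'; rewrite -H0 eqxx.
move=> e eJI eJI'; have /setDP [eJ _] := eJI.
by rewrite -psg' // /p0 eJ /= vs.
Qed.

Lemma Cell_eq I J sg I' J' sg' : wit I J sg -> wit I' J' sg' ->
  Cell V I J sg = Cell V I' J' sg' ->
  [/\ I = I', J = J' & forall e, e \in J :\: I -> sg e = sg' e].
Proof.
move=> w1 w2 HC.
have [IJ1 JJ1 s1] : [/\ I \subset I', J \subset J' & forall e, e \in J :\: I -> e \in J' :\: I' -> sg' e = sg e].
  by apply: Cell_sub w1 _ _; [case: w2 | rewrite HC].
have [IJ2 JJ2 s2] : [/\ I' \subset I, J' \subset J & forall e, e \in J' :\: I' -> e \in J :\: I -> sg e = sg' e].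
  by apply: Cell_sub w2 _ _; [case: w1 | rewrite HC].
have eI : I = I' by apply/eqP; rewrite finset.eqEsubset IJ1 IJ2.
have eJ : J = J' by apply/eqP; rewrite finset.eqEsubset JJ1 JJ2.
split => // e eJI; rewrite s1 //; by rewrite -eI -eJ.
Qed.

Lemma Cell_eq2 I J sg sg' : (forall e, e \in J :\: I -> sg e = sg' e) ->
  Cell V I J sg = Cell V I J sg'.
Proof.
move=> H; apply: funext => p; apply: propext.
split => -[h1 h2 h3]; split => // e eJI.
  by rewrite -H // h3.
by rewrite H // h3.
Qed.

Lemma adm_wit I J S : adm_triple V I J S -> wit I J S.
Proof.
move=> [/tope_vec [s0 Vs0 HS] IJ rI rJ]; subst S.
have [x [Vx xI xs]] := racyc_vec rI.
have xn e : e \in J :\: I -> x e != 0 by move=> /setDP [_ eI]; rewrite xI.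
split => //.
  exists x; split => //; first by move=> e eI; apply/eqP; rewrite xI.
  by move=> e eJI; rewrite xs // xn.
by move=> e eJI; rewrite /= xs ?xn // sgz_eq0 xn.
Qed.

Lemma minor_wit (F G : {set E}) (T : E -> int) : flat V F -> F \subset G -> minor_tope V F G T -> wit F G T.
Proof.
move=> fF FG mT; have Tn := Tnz HV fF mT.
have [y [Vy yF HT]] := minor_vec mT.1.
split => //; exists y; split => // e /setDP [eG _].
by rewrite HT eG.
Qed.

End Comb4.
Section Comb5.
Variables (R : realType) (E : finType).
Variable V : set (E -> R).
Hypothesis HV : is_subspace V.

Lemma nonloop_seq (s : seq E) : exists2 u : E -> R, V u &
  forall e, e \in s -> u e = 0 -> forall v, V v -> v e = 0.
Proof.
have [V0 [VD VZ]] := HV.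
elim: s => [|e0 s [u Vu Hu]]; first by exists (fun _ => 0).
case: (pselect (forall v, V v -> v e0 = 0)) => Hl.
  exists u => // e; rewrite inE => /orP [/eqP -> _ //|]; exact: Hu.
have [v [Vv ve0]] : exists v, V v /\ v e0 != 0.
  apply: contrapT => H; apply: Hl => v Vv; apply/eqP; apply: contrapT => /negP vn.
  by apply: H; exists v.
case: (eqVneq (u e0) 0) => ue0; last first.
  exists u => // e; rewrite inE => /orP [/eqP -> h|]; last exact: Hu.
  by rewrite h eqxx in ue0.
have [d d0 Hd] := perturb u v.
exists (fun e => u e + d * v e); first by apply: (VD) => //; exact: VZ.
move=> e; rewrite inE => es /eqP.
rewrite -sgz_eq0 (Hd d d0 (lexx d)); case: (eqVneq (u e) 0) => ue; last first.
  by rewrite /= sgz_eq0 (negbTE ue).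
rewrite /= sgz_eq0 => ve; case/orP: es => [/eqP ee|es].
  by move: ve0; rewrite -ee ve.
exact: Hu.
Qed.

Lemma exists_adm (F G : {set E}) (T : E -> int) : flat V F -> flat V G -> F \subset G ->
  minor_tope V F G T -> exists S, adm_triple V F G S /\ forall e, e \in G :\: F -> S e = T e.
Proof.
move=> fF fG FG mT.
have [V0 [VD VZ]] := HV.
have Tn := Tnz HV fF mT.
have [y [Vy yF HT]] := minor_vec mT.1.
have [g Vg gG] := flat_vec fG.
have [u Vu Hu] := nonloop_seq (enum E).
have [d1 d10 Hd1] := perturb g y.
have [d2 d20 Hd2] := perturb (fun e => g e + d1 * y e) u.
pose s1 := fun e => g e + d1 * y e.
have Vs1 : V s1 by apply: (VD) => //; exact: VZ.
pose s := fun e => s1 e + d2 * u e.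
have Vs : V s by apply: (VD) => //; exact: VZ.
have Hs1 e : sgz (s1 e) = if g e == 0 then sgz (y e) else sgz (g e) := Hd1 d1 d10 (lexx _) e.
have Hs e : sgz (s e) = if s1 e == 0 then sgz (u e) else sgz (s1 e) := Hd2 d2 d20 (lexx _) e.
have yn e : e \in G :\: F -> y e != 0.
  by move=> eGF; have := Tn e eGF; rewrite HT; have /setDP [-> _] := eGF; rewrite sgz_eq0.
have s1F e : (s1 e == 0) = (e \in F).
  rewrite -sgz_eq0 Hs1 gG; case: (boolP (e \in G)) => eG.
    case: (boolP (e \in F)) => eF; first by rewrite yF // sgz0.
    by rewrite sgz_eq0; apply/negbTE; apply: yn; rewrite inE eF eG.
  rewrite sgz_eq0 gG (negbTE eG); apply/esym/negbTE.
  by apply: contra eG; exact: (fintype.subsetP FG).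
have sle_of (X Y : sgnset E) : (forall e, X e != 0 -> Y e = X e) -> sle X Y.
  move=> H; split; apply/fintype.subsetP => e; rewrite !inE => h.
    by rewrite H // gt_eqF.
  by rewrite H // lt_eqF.
exists (fun e => sgz (s e)); split; last first.
  move=> e eGF; have /setDP [eG eF] := eGF.
  by rewrite Hs s1F (negbTE eF) Hs1 gG eG HT eG.
split => //.
- split; first by exists s.
  move=> Y /cov_vec [y' Vy' ->] sl e.
  case: (eqVneq (s e) 0) => se; last by exact: sle_sgz sl se.
  have := Hs e; rewrite se sgz0; case: ifP => [_|/negbT s1n /esym/eqP]; last by rewrite sgz_eq0 (negbTE s1n).
  move=> /esym/eqP; rewrite sgz_eq0 => /eqP ue.
  by rewrite (Hu e (mem_enum _ _) ue y' Vy') sgz0.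
- exists (fun e => sgz (s1 e)); split.
  + by exists s1.
  + apply: sle_of => e; rewrite sgz_eq0 => h; by rewrite Hs (negbTE h).
  + by apply/setP => e; rewrite inE sgz_eq0 s1F.
- exists (fun e => sgz (g e)); split.
  + by exists g.
  + apply: sle_of => e; rewrite sgz_eq0 => h.
    have h1 : s1 e != 0 by rewrite -sgz_eq0 Hs1 (negbTE h) sgz_eq0.
    by rewrite Hs (negbTE h1) Hs1 (negbTE h).
  + by apply/setP => e; rewrite inE sgz_eq0 gG.
Qed.
End Comb5.

Theorem lemma5p4 (R : realType) (E : finType) (V : set (E -> R)) :
  is_subspace V ->
  (forall I J S I' J' S', adm_triple V I J S -> adm_triple V I' J' S' ->
     (cellSY V S I J = cellSY V S' I' J' <-> triple_equiv I J S I' J' S')) /\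
  (forall (F G : {set E}) (T : E -> int),
     flat V F -> flat V G -> F \subset G -> minor_tope V F G T ->
     forall I J S, adm_triple V I J S ->
       (cellY V F G T = cellSY V S I J <->
        [/\ F = I, G = J & forall e, e \in G :\: F -> S e = T e])) /\
  (forall (F G : {set E}) (T : E -> int),
     flat V F -> flat V G -> F \subset G -> minor_tope V F G T ->
     exists I J S, adm_triple V I J S /\ cellY V F G T = cellSY V S I J).
Proof.
move=> HV; split; [|split].
- move=> I J S I' J' S' A1 A2; rewrite (L2 HV A1) (L2 HV A2); split.
    move=> HC; have [h1 h2 h3] := Cell_eq (adm_wit A1) (adm_wit A2) HC.
    by split => // e eJI; rewrite h3.
  by move=> [<- <- h3]; apply: Cell_eq2.
- move=> F G T fF fG FG mT I J S A; rewrite (L1 HV fF fG FG mT) (L2 HV A); split.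
    move=> HC; have [h1 h2 h3] := Cell_eq (minor_wit HV fF FG mT) (adm_wit A) HC.
    by split => // e eGF; rewrite h3.
  by move=> [<- <- h3]; apply: Cell_eq2 => e eGF; rewrite h3.
- move=> F G T fF fG FG mT.
  have [S [A HS]] := exists_adm HV fF fG FG mT.
  exists F, G, S; split => //; rewrite (L1 HV fF fG FG mT) (L2 HV A).
  by apply: Cell_eq2 => e eGF; rewrite HS.
Qed.
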